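(* Let $p>3$ be a prime number and $k$ an integer with $1\leq k\leq\frac{p-1}{2}$, and let $\zeta_p=e^{2\pi i/p}$. Then $\mathbb{Q}\!\left(\zeta_p,\sqrt[p]{\zeta_p^k+\zeta_p^{-k}}\right)/\mathbb{Q}(\zeta_p)$ is a cyclic field extension of degree $p$.
   Context: $\sqrt[p]{\zeta_p^k+\zeta_p^{-k}}$ denotes any $p$-th root of the real number $\zeta_p^k+\zeta_p^{-k}$; the field generated over $\mathbb{Q}(\zeta_p)$ does not depend on the choice. A cyclic extension is a Galois extension with cyclic Galois group. *)

(* Defs.v *)
From HB Require Import structures.
From mathcomp Require Import all_boot all_order all_algebra all_fingroup all_solvable all_field.
Set Implicit Arguments. Unset Strict Implicit. Unset Printing Implicit Defensive.
Import GRing.Theory Num.Theory.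
Local Open Scope ring_scope.

(* zeta_p = e^{2 pi i / p} in the algebraic complex numbers algC:
   p.-root (-1) is the p-th root of -1 of minimal non-negative argument,
   i.e. e^{i pi / p}; its square is e^{2 i pi / p}. *)
Definition zetaC (p : nat) : algC := (p.-root (-1)) ^+ 2.

(* Main.v *)
Require Import Defs.
From HB Require Import structures.
From mathcomp Require Import all_boot all_order all_algebra all_fingroup all_solvable all_field.
From mathcomp Require Import ring lra zify.
Set Implicit Arguments. Unset Strict Implicit. Unset Printing Implicit Defensive.
Import GRing.Theory Num.Theory.
Local Open Scope ring_scope.

Lemma geomA (x : algC) n : x \in Aint -> exists2 y, y \in Aint & 1 - x ^+ n = (1 - x) * y.
Proof.
move=> Ax; exists (\sum_(i < n) x ^+ i); first by apply: rpred_sum => i _; apply: rpredX.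
by rewrite -opprB subrX1 -mulNr opprB.
Qed.

Section Units.
Variable p : nat.
Hypothesis hp : prime p.
Variable w : algC.
Hypothesis pw : p.-primitive_root w.

Lemma w_Aint : w \in Aint.
Proof. exact: Aint_prim_root pw. Qed.

Lemma p_prod : p%:R = \prod_(1 <= i < p) (1 - w ^+ i).
Proof.
have p0 : (0 < p)%N by apply: prime_gt0.
have := factor_Xn_sub_1 pw.
rewrite big_ltn // expr0 => E.
have : ('X - 1%:P) * (\sum_(i < p) 'X ^+ i) = ('X - 1%:P) * \prod_(1 <= i < p) ('X - (w ^+ i)%:P) :> {poly algC}.
  by rewrite E polyC1 subrX1.
have -> : p%:R = \sum_(i < p) ('X^i : {poly algC}).[1].
  by rewrite (eq_bigr (fun _ => 1)) ?sumr_const ?card_ord // => i _; rewrite hornerXn expr1n.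
move/mulfI => /(_ (negbT (polyXsubC_eq0 1))) => /(congr1 (fun q => q.[1])).
rewrite horner_sum horner_prod => ->.
by apply: eq_bigr => i _; rewrite hornerXsubC.
Qed.

Lemma p_gt1 : (1 < p)%N. Proof. exact: prime_gt1. Qed.

Lemma w_neq1 : 1 - w != 0.
Proof.
rewrite subr_eq0 eq_sym -{1}(expr1 w) -(expr0 w) (eq_prim_root_expr pw).
by rewrite /eqn modn_small ?mod0n ?p_gt1.
Qed.

Lemma wi_neq1 i : ~~ (p %| i)%N -> 1 - w ^+ i != 0.
Proof.
move=> hi; rewrite subr_eq0 eq_sym -(expr0 w) (eq_prim_root_expr pw) mod0n.
by apply: contra hi.
Qed.

Lemma ratio1 i : (1 - w ^+ i) / (1 - w) \in Aint.
Proof.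
have [y Ay ->] := geomA i w_Aint.
by rewrite mulrC mulKf ?w_neq1.
Qed.

Lemma ratio2 i : ~~ (p %| i)%N -> (1 - w) / (1 - w ^+ i) \in Aint.
Proof.
move=> hi.
have pwi : p.-primitive_root (w ^+ i).
  by rewrite prim_root_exp_coprime // coprime_sym prime_coprime.
have [j Ej] := prim_rootP pwi (prim_expr_order pw).
rewrite {1}Ej.
have [y Ay ->] := geomA j (rpredX i w_Aint).
by rewrite mulrC mulKf ?wi_neq1.
Qed.

Lemma unit1 : p%:R / (1 - w) ^+ p.-1 \in Aint.
Proof.
rewrite p_prod -subn1 -(prodr_const_nat 1 p) -prodf_div.
rewrite big_nat rpred_prod // => i _; exact: ratio1.
Qed.

Lemma unit2 : (1 - w) ^+ p.-1 / p%:R \in Aint.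
Proof.
rewrite p_prod -subn1 -(prodr_const_nat 1 p) -prodf_div.
rewrite big_nat rpred_prod // => i /andP[i1 ip]; apply: ratio2.
by rewrite gtnNdvd.
Qed.
End Units.
Section Arith.
Variable p : nat.
Hypothesis hp : prime p.

Lemma pC_neq0 : p%:R != 0 :> algC.
Proof. by rewrite pnatr_eq0 -lt0n prime_gt0. Qed.

Lemma intdiv (x : algC) j : x \in Num.int -> (0 < j)%N ->
  x ^+ j / p%:R \in Aint -> x / p%:R \in Num.int.
Proof.
move=> Zx j0 A.
have Q : x ^+ j / p%:R \in Crat.
  by have [n ->] := intrP Zx; rewrite rpredM ?rpredV ?rpredX ?rpred_nat ?rpred_int.
have Z := Cint_rat_Aint Q A.
have D : (p %| x ^+ j)%C by rewrite unfold_in (negPf pC_neq0).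
rewrite (dvdC_int _ (rpredX _ Zx)) in D.
have [n En] := intrP Zx; subst x.
rewrite -rmorphXn /= intrKfloor abszX Euclid_dvdX // j0 andbT in D.
have : (p %| n%:~R)%C by rewrite dvdC_int ?rpred_int // intrKfloor.
by rewrite unfold_in (negPf pC_neq0).
Qed.


Lemma frob (x y : algC) : x \in Aint -> y \in Aint ->
  ((x + y) ^+ p - x ^+ p - y ^+ p) / p%:R \in Aint.
Proof.
move=> Ax Ay.
have p0 : (0 < p)%N by apply: prime_gt0.
rewrite exprDn big_ord_recl /= subn0 expr0 mulr1 bin0 mulr1n.
rewrite -(prednK p0) big_ord_recr /= /bump /= add1n prednK // subnn expr0 mul1r binn mulr1n.
have -> : forall a b c : algC, (a + (b + c) - a - c) = b by move=> *; ring.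
rewrite mulr_suml rpred_sum // => i _.
have hi : (0 < i.+1 < p)%N.
  by have := ltn_ord i; lia.
have := prime_dvd_bin hp hi => /dvdnP [m ->].
rewrite -mulr_natr natrM mulrA mulfK ?pC_neq0 //.
by rewrite rpredM ?rpred_nat // rpredM // rpredX.
Qed.

Lemma lsub (f : {poly algC}) x : f \is a polyOver Aint -> x \in Aint ->
  exists2 r, r \in Aint & f.[x] = f`_0 + x * r.
Proof.
move=> Af Ax; exists (\sum_(i < (size f).-1) f`_i.+1 * x ^+ i).
  by apply: rpred_sum => i _; rewrite rpredM ?rpredX // (polyOverP Af).
rewrite horner_coef; case E: (size f) => [|n] /=.
  by rewrite !big_ord0 mulr0 addr0 nth_default // E.
rewrite big_ord_recl /= expr0 mulr1 mulr_sumr; congr (_ + _).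
by apply: eq_bigr => i _; rewrite exprS /bump /= add1n; ring.
Qed.

End Arith.

Lemma powid (a b P : algC) n : P != 0 -> b != 0 ->
  (a * P ^+ n / b) ^+ n.+1 * (b / P ^+ n.+1) ^+ n = a ^+ n.+1 / b.
Proof.
move=> P0 b0.
rewrite !expr_div_n !exprMn -!exprM mulnC [(n.+1 * n)%N]mulnC exprS [b ^+ n.+1]exprS.
have Q : P ^+ (n * n.+1) != 0 by rewrite expf_neq0.
have B : b ^+ n != 0 by rewrite expf_neq0.
field. by rewrite Q B b0.
Qed.

Section Digit.
Variable p : nat.
Hypothesis hp : prime p.
Hypothesis p3 : (3 < p)%N.
Variable z : algC.
Hypothesis pz : p.-primitive_root z.
Local Notation pi := (1 - z).

Lemma pi_neq0 : pi != 0. Proof. exact: (w_neq1 hp pz). Qed.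
Lemma pi_Aint : pi \in Aint. Proof. by rewrite rpredB // (w_Aint pz). Qed.
Lemma U1 : p%:R / pi ^+ p.-1 \in Aint. Proof. exact: (unit1 hp pz). Qed.
Lemma U2 : pi ^+ p.-1 / p%:R \in Aint. Proof. exact: (unit2 hp pz). Qed.

Lemma digit (h : {poly algC}) : h \is a polyOver Num.int -> forall m,
  (m + size h <= p.-1)%N -> pi ^+ m * h.[pi] / p%:R \in Aint ->
  forall i, h`_i / p%:R \in Num.int.
Proof.
elim/poly_ind: h => [|h1 c IH] Hh m Hs A i.
  by rewrite coef0 mul0r rpred0.
have Hc : c \in Num.int.
  by have := polyOverP Hh 0; rewrite coefD coefMX coefC /= add0r.
have Hh1 : h1 \is a polyOver Num.int.
  apply/polyOverP => j; have := polyOverP Hh j.+1.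
  by rewrite coefD coefMX coefC /= addr0.
have [/andP [/eqP h10 /eqP c0] | hn] := boolP ((h1 == 0) && (c == 0)).
  by rewrite h10 c0 mul0r add0r coefC; case: (i == 0); rewrite mul0r rpred0.
rewrite size_MXaddC (negPf hn) in Hs.
have Pn : p.-1 = (p.-2).+1 by lia.
have Hm : (m <= p.-2)%N by lia.
have E0 : (h1 * 'X + c%:P).[pi] = h1.[pi] * pi + c by rewrite hornerMXaddC.
rewrite E0 in A.
have Bc : c * pi ^+ p.-2 / p%:R \in Aint.
  have -> : c * pi ^+ p.-2 / p%:R =
     pi ^+ (p.-2 - m) * (pi ^+ m * (h1.[pi] * pi + c) / p%:R)
     - h1.[pi] * (pi ^+ p.-1 / p%:R).
    rewrite Pn exprS.
    have -> : pi ^+ p.-2 = pi ^+ (p.-2 - m) * pi ^+ m by rewrite -exprD subnK.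
    field; exact: pC_neq0.
  rewrite rpredB // rpredM ?rpredX ?pi_Aint //; last exact: U2.
  by rewrite rpred_horner ?pi_Aint // (polyOverS _ Hh1) // => x; apply: Aint_Cint.
have Cc : c / p%:R \in Num.int.
  apply: (@intdiv p hp c p.-1) => //; first by rewrite Pn.
  rewrite Pn -(@powid c p%:R pi p.-2 pi_neq0 (pC_neq0 hp)) rpredM // rpredX //.
  by rewrite -Pn U1.
have A1 : pi ^+ m.+1 * h1.[pi] / p%:R \in Aint.
  have -> : pi ^+ m.+1 * h1.[pi] / p%:R =
      pi ^+ m * (h1.[pi] * pi + c) / p%:R - pi ^+ m * (c / p%:R).
    rewrite exprS; field; exact: pC_neq0.
  by rewrite rpredB // rpredM ?rpredX ?pi_Aint // Aint_Cint.
have := IH Hh1 m.+1 _ A1.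
rewrite coefD coefMX coefC.
case: i => [|i] /=; first by rewrite add0r.
by rewrite addr0 => H; apply: H; rewrite addSn -addnS.
Qed.


Lemma geomsum (w : algC) : w ^+ p = 1 ->
  \sum_(j < p) w ^+ j = if w == 1 then p%:R else 0.
Proof.
move=> wp; case: eqP => [-> | ne].
  by rewrite (eq_bigr (fun _ => 1)) ?sumr_const ?card_ord // => j _; rewrite expr1n.
have : (w - 1) * \sum_(j < p) w ^+ j = 0 by rewrite -subrX1 wp subrr.
by move/eqP; rewrite mulf_eq0 subr_eq0 (introF eqP ne) /= => /eqP.
Qed.

Lemma modne (m i : nat) : (m < p)%N -> (i < p)%N -> i != m ->
  ((p - m + i) %% p != 0)%N.
Proof.
move=> hm hi ne.
have [lt|gt] := ltnP i m.
  rewrite modn_small; lia.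
have -> : (p - m + i = (i - m) + p)%N by lia.
rewrite modnDr modn_small; lia.
Qed.

Lemma trace (q : {poly algC}) : q \is a polyOver Crat -> (size q <= p.-1)%N ->
  q.[z] \in Aint -> forall m, p%:R * q`_m \in Num.int.
Proof.
move=> Hq Hsz Ac.
have p0 : (0 < p)%N by apply: prime_gt0.
have zp : z ^+ p = 1 := prim_expr_order pz.
have zA : z \in Aint := w_Aint pz.
have Cj : forall j, (0 < j < p)%N -> q.[z ^+ j] \in Aint.
  move=> j /andP[j0 jp].
  have cop : coprime j p by rewrite coprime_sym prime_coprime // gtnNdvd.
  have [u hu] := Qn_aut_exists cop.
  have : u q.[z] \in Aint by rewrite Aint_aut.
  rewrite -horner_map /= hu //.
  have -> // : map_poly u q = q.
  by apply/polyP => i; rewrite coef_map /= aut_Crat // (polyOverP Hq).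
have Hsum : forall m, (m < p.-1)%N ->
    \sum_(j < p) z ^+ ((p - m) * j) * q.[z ^+ j] = p%:R * q`_m.
  move=> m hm.
  under eq_bigr do rewrite (horner_coef_wide _ Hsz) mulr_sumr.
  rewrite exchange_big /=.
  transitivity (\sum_(i < p.-1) q`_i * (\sum_(j < p) (z ^+ (p - m + i)) ^+ j)).
    apply: eq_bigr => i _; rewrite mulr_sumr; apply: eq_bigr => j _.
    rewrite -!exprM mulrCA -exprD; congr (_ * (z ^+ _)).
    by rewrite mulnDl [(j * i)%N]mulnC.
  rewrite (bigD1 (Ordinal hm)) //= [X in _ + X]big1 => [|i ne].
    rewrite subnK; last by lia.
    rewrite geomsum; last by rewrite zp expr1n.
    by rewrite zp eqxx addr0 mulrC.
  rewrite geomsum; last by rewrite exprAC zp expr1n.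
  rewrite -(expr0 z) (eq_prim_root_expr pz) mod0n.
  rewrite (negPf (modne _ _ _)) ?mulr0 //; try lia.
  by have := ltn_ord i; lia.
have SQ : q.[1] \in Crat by rewrite rpred_horner ?rpred1.
have Dm : forall m, (m < p.-1)%N -> p%:R * q`_m - q.[1] \in Num.int.
  move=> m hm; apply: Cint_rat_Aint.
    by rewrite rpredB // rpredM ?rpred_nat // (polyOverP Hq).
  rewrite -Hsum // (bigD1 (Ordinal p0)) //= muln0 !expr0 mul1r addrC -addrA subrr addr0.
  apply: rpred_sum => j j0; rewrite rpredM ?rpredX //; apply: Cj.
  by rewrite ltn_ord andbT lt0n.
have Sint : q.[1] \in Num.int.
  have -> : q.[1] = \sum_(m < p.-1) (p%:R * q`_m - q.[1]).
    rewrite sumrB -mulr_sumr sumr_const card_ord.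
    have -> : \sum_(i < p.-1) q`_i = q.[1].
      by rewrite (horner_coef_wide _ Hsz); apply: eq_bigr => i _; rewrite expr1n mulr1.
    have -> : p%:R = (p.-1)%:R + 1 :> algC by rewrite natr1 prednK.
    rewrite -mulr_natr; ring.
  by apply: rpred_sum => m _; apply: Dm.
move=> m; have [hm|hm] := ltnP m p.-1.
  by rewrite -(subrK q.[1] (p%:R * q`_m)) rpredD // Dm.
by rewrite nth_default ?mulr0 ?rpred0 // (leq_trans Hsz).
Qed.

End Digit.

Lemma ar1 p : (3 < p)%N -> p.-1 = ((p - 4) + 3)%N. Proof. lia. Qed.
Lemma ar2 p : (3 < p)%N -> p.-2 = ((p - 4) + 2)%N. Proof. lia. Qed.
Lemma ar3 p : (3 < p)%N -> (0 < p.-1)%N. Proof. lia. Qed.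
Lemma ar4 p : (0 < p)%N -> (p.-1 < p * 2)%N. Proof. lia. Qed.
Lemma ar5 n p : (n.+1 <= p)%N -> (n <= p.-1)%N. Proof. lia. Qed.

Section Main.
Variable p : nat.
Hypothesis hp : prime p.
Hypothesis p3 : (3 < p)%N.
Variable z : algC.
Hypothesis pz : p.-primitive_root z.
Local Notation pi := (1 - z).

Lemma no_root (q : {poly algC}) k : q \is a polyOver Crat -> (size q <= p.-1)%N ->
  ~~ (p %| k)%N -> q.[z] ^+ p != z ^+ k + (z ^+ k)^-1.
Proof.
move=> Hq Hsz Hk; apply/eqP => Hc.
have p0 : (0 < p)%N by apply: prime_gt0.
have zp : z ^+ p = 1 := prim_expr_order pz.
have zA : z \in Aint := w_Aint pz.
have pC0 := pC_neq0 hp.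
have pi0 : pi != 0 := pi_neq0 hp pz.
have piA : pi \in Aint := pi_Aint pz.
have u1 := U1 hp pz.
have u2 := U2 hp pz.
set K := z ^+ k.
have KA : K \in Aint by rewrite rpredX.
have K0 : K != 0 by rewrite expf_neq0 // (prim_root_eq0 pz) -lt0n.
have KiA : K^-1 \in Aint.
  apply: (Aint_unity_root p0); apply/unity_rootP.
  by rewrite exprVn exprAC zp expr1n invr1.
set b := K + K^-1.
have bA : b \in Aint by rewrite rpredD.
set c := q.[z].
have cA : c \in Aint.
  apply: (@root_monic_Aint ((minCpoly b) \Po 'X^p)).
  - by rewrite /root horner_comp hornerXn Hc; exact: root_minCpoly.
  - rewrite monicE lead_coef_comp ?size_polyXn // lead_coefXn expr1n mulr1.
    exact: minCpoly_monic.
  - by apply: polyOver_comp; [move: bA; rewrite unfold_in | rewrite rpredX ?polyOverX].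
pose pq := p%:R *: q.
have pqZ : pq \is a polyOver Num.int.
  by apply/polyOverP => i; rewrite coefZ; exact: (trace hp p3 pz Hq Hsz cA).
pose t1 : {poly algC} := 1 - 'X.
have t1s : size t1 = 2 by rewrite /t1 -opprB size_opp -polyC1 size_XsubC.
pose g := pq \Po t1.
have gZ : g \is a polyOver Num.int.
  by apply: polyOver_comp => //; rewrite rpredB ?rpred1 ?polyOverX.
have gs : (size g <= p.-1)%N.
  by rewrite size_comp_poly2 // (leq_trans (size_scale_leq _ _)).
have gE : g.[pi] = p%:R * c.
  by rewrite horner_comp /t1 !hornerE opprB addrC subrK.
have dig := digit hp p3 pz gZ (m := 0) gs.
have {dig} dig : forall i, g`_i / p%:R \in Num.int.
  by apply: dig; rewrite expr0 mul1r gE mulrC mulKf.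
pose f := p%:R^-1 *: g.
have fA : f \is a polyOver Aint.
  by apply/polyOverP => i; rewrite coefZ mulrC Aint_Cint.
have fE : f.[pi] = c by rewrite hornerZ gE mulKf.
have [r rA cE] := lsub fA piA.
set e := f`_0 in cE.
have eZ : e \in Num.int by rewrite /e coefZ mulrC.
have eA : e \in Aint by rewrite Aint_Cint.
have tA : (c ^+ p - e ^+ p) / p%:R \in Aint.
  have -> : (c ^+ p - e ^+ p) / p%:R =
     ((e + pi * r) ^+ p - e ^+ p - (pi * r) ^+ p) / p%:R
     + (pi ^+ p.-1 / p%:R) * pi * r ^+ p.
    have Pp : pi ^+ p = pi ^+ p.-1 * pi by rewrite -exprSr prednK.
    rewrite -fE cE exprMn Pp; field.
    by rewrite pC0.
  apply: rpredD; first exact: (frob hp eA (rpredM piA rA)).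
  by apply: rpredM; [apply: rpredM | apply: rpredX].
set t := (c ^+ p - e ^+ p) / p%:R in tA.
set N := 2 - e ^+ p.
have NZ : N \in Num.int by rewrite rpredB ?rpred_nat ?rpredX.
have NE : N = p%:R * t - K^-1 * (1 - K) ^+ 2.
  rewrite /t /N Hc /K; field; by rewrite pC0 expf_neq0 // (prim_root_eq0 pz) -lt0n.
have P1 : p.-1 = ((p - 4) + 3)%N by apply: ar1.
have P2 : p.-2 = ((p - 4) + 2)%N by apply: ar2.
have r1 : (1 - K) / pi \in Aint by exact: (ratio1 hp pz k).
have r2 : pi / (1 - K) \in Aint by exact: (@ratio2 p hp z pz k Hk).
have K1 : 1 - K != 0 := wi_neq1 pz Hk.
have NpA : N / pi \in Aint.
  have -> : N / pi = (p%:R / pi ^+ p.-1) * pi ^+ p.-2 * t - K^-1 * ((1 - K) / pi) * (1 - K).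
    rewrite NE P2 P1 !exprD; field; rewrite ?pC0 ?pi0 ?K0 ?K1 ?expf_neq0 ?andbT //.
  apply: rpredB; first by apply: rpredM => //; apply: rpredM => //; apply: rpredX.
  by apply: rpredM; [apply: rpredM | rewrite rpredB].
have Np : N / p%:R \in Num.int.
  apply: (@intdiv p hp N p.-1) => //; first by apply: ar3.
  have -> : N ^+ p.-1 / p%:R = (N / pi) ^+ p.-1 * (pi ^+ p.-1 / p%:R).
    by rewrite expr_div_n; field; rewrite ?pC0 ?pi0 ?K0 ?K1 ?expf_neq0 ?andbT //.
  by apply: rpredM => //; apply: rpredX.
have ipA : pi^-1 \in Aint.
  have -> : pi^-1 = K * (pi / (1 - K)) ^+ 2 * ((p%:R / pi ^+ p.-1) * pi ^+ (p - 4)) * (t - N / p%:R).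
    rewrite NE P1 !exprD; field; rewrite ?pC0 ?pi0 ?K0 ?K1 ?expf_neq0 ?andbT //.
  apply: rpredM; last by rewrite rpredB // Aint_Cint.
  apply: rpredM; last by apply: rpredM => //; apply: rpredX.
  by apply: rpredM => //; apply: rpredX.
have iZ : (p%:R : algC)^-1 \in Num.int.
  apply: Cint_rat_Aint; first by rewrite rpredV rpred_nat.
  have -> : p%:R^-1 = pi^-1 ^+ p.-1 * (pi ^+ p.-1 / p%:R) :> algC.
    by rewrite exprVn mulrA mulVf ?mul1r // expf_neq0.
  by apply: rpredM => //; apply: rpredX.
have : 0 <= p%:R^-1 :> algC by rewrite invr_ge0 ler0n.
move/intrEge0 => H; rewrite H in iZ.
have [n En] := natrP iZ.
have : (n * p)%:R == 1 :> algC by rewrite natrM -En mulVf.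
rewrite pnatr_eq1 muln_eq1 => /andP [_ /eqP p1].
by move: p3; rewrite p1.
Qed.
End Main.

Lemma zeta_prim p : prime p -> (2 < p)%N -> p.-primitive_root (zetaC p).
Proof.
move=> hp p2; have p0 : (0 < p)%N by apply: prime_gt0.
rewrite /zetaC; set y := p.-root (-1).
have yp : y ^+ p = -1 by rewrite rootCK.
have zp : (y ^+ 2) ^+ p = 1 by rewrite exprAC yp sqrrN expr1n.
have [m pm mp] := prim_order_exists p0 zp.
have := (primeP hp).2 m mp => /orP [/eqP m1 | /eqP mpe]; last by rewrite -mpe.
have z1 : y ^+ 2 = 1 by have := prim_expr_order pm; rewrite m1 expr1.
exfalso; move: z1 => /eqP; rewrite -subr_eq0 subr_sqr_1 mulf_eq0.
case/orP => [|]; rewrite ?subr_eq0 ?addr_eq0 => /eqP y1.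
  by move: yp; rewrite y1 expr1n => /eqP; rewrite -addr_eq0 -[1 + 1]/(2%:R : algC) pnatr_eq0.
have := @rootC_lt0 algC p (-1) (ltnW p2); rewrite -/y y1 oppr_lt0 ltr01.
done.
Qed.

Theorem mainTheorem11
  (p k : nat) (hp : prime p) (hp3 : (3 < p)%N)
  (hk1 : (1 <= k)%N) (hk2 : (k <= p.-1./2)%N)
  (L : splittingFieldType rat) (iota : {rmorphism L -> algC})
  (z a : L)
  (hz : iota z = zetaC p)
  (ha : a ^+ p = z ^+ k + z ^- k) :
  let E : {subfield L} := <<1; z>>%VS in
  let F : {subfield L} := <<E; a>>%VS in
  [/\ galois E F, cyclic 'Gal(F / E) & \dim_E F = p].
Proof.
move=> E F.
have p0 : (0 < p)%N by apply: prime_gt0.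
have pzC : p.-primitive_root (zetaC p) by apply: zeta_prim => //; apply: ltnW.
have pz : p.-primitive_root z by rewrite -(fmorph_primitive_root iota) hz.
have zp : z ^+ p = 1 := prim_expr_order pz.
have zE : z \in E by apply: memv_adjoin.
have hk : ~~ (p %| k)%N.
  rewrite gtnNdvd //; apply: (leq_ltn_trans hk2).
  rewrite -divn2 ltn_divLR //; exact: ar4.
set b := z ^+ k + z ^- k.
have bE : b \in E by rewrite rpredD ?rpredV ?rpredX.
have aE : a \notin E.
  apply/negP => aE.
  set q1 := Fadjoin_poly 1 z a.
  have q1E : q1.[z] = a by apply: Fadjoin_poly_eq.
  have /polyOver1P [q0 q0E] := Fadjoin_polyOver 1 z a.
  pose q : {poly algC} := map_poly ratr q0.
  have qQ : q \is a polyOver Crat.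
    by apply/polyOverP => i; rewrite coef_map /= Crat_rat.
  pose Phi : {poly L} := \poly_(i < p) 1.
  have Phi0 : Phi != 0.
    by rewrite -size_poly_eq0 size_poly_eq ?oner_eq0 // -lt0n.
  have degz : (adjoin_degree 1 z <= p.-1)%N.
    have : (size (minPoly 1 z) <= size Phi)%N.
      apply: dvdp_leq => //; apply: minPoly_dvdp.
        by apply: polyOver_poly => i _; apply: mem1v.
      rewrite /root /Phi horner_poly.
      under eq_bigr do rewrite mul1r.
      have : (z - 1) * \sum_(i < p) z ^+ i = 0 by rewrite -subrX1 zp subrr.
      move/eqP; rewrite mulf_eq0 subr_eq0 => /orP [z1|//].
      have : z ^+ 1 == z ^+ 0 by rewrite expr1 expr0.
      by rewrite (eq_prim_root_expr pz) !modn_small ?prime_gt1.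
    rewrite size_minPoly /Phi size_poly_eq ?oner_eq0 //; exact: ar5.
  have qs : (size q <= p.-1)%N.
    rewrite size_map_poly -(size_map_poly (in_alg L)) -q0E.
    exact: leq_trans (size_Fadjoin_poly _ _ _) degz.
  have qz : q.[zetaC p] = iota a.
    rewrite -q1E -hz -horner_map /=; congr (_.[_]).
    rewrite /q1 q0E; apply/polyP => i; rewrite !coef_map /= alg_num_field fmorph_rat.
    done.
  have := no_root hp hp3 pzC qQ qs hk.
  by rewrite qz -rmorphXn ha /= rmorphD fmorphV !rmorphXn hz eqxx.
have a0 : a != 0 by apply: contraNneq aE => ->; apply: mem0v.
have b0 : b != 0 by rewrite /b -ha expf_neq0.
have EF : (E <= F)%VS by apply: subv_adjoin.
have aF : a \in F by apply: memv_adjoin.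
pose P : {poly L} := 'X^p - b%:P.
pose rs := [seq a * z ^+ i | i <- seq.iota 0 p].
have rsU : uniq rs.
  rewrite map_inj_in_uniq ?iota_uniq // => i j; rewrite !mem_iota !add0n => ip jp.
  move/(mulfI a0)/eqP; rewrite (eq_prim_root_expr pz) !modn_small //.
  by move/eqP.
have rsR : all (root P) rs.
  apply/allP => _ /mapP [i _ ->]; rewrite /root /P !hornerE.
  by rewrite exprMn exprAC zp expr1n mulr1 ha subrr.
have PE : P = \prod_(x <- rs) ('X - x%:P).
  rewrite {1}(all_roots_prod_XsubC (p := P) (rs := rs)) //.
  - by rewrite (monicP (monicXnsubC _ p0)) scale1r.
  - by rewrite size_XnsubC // size_map size_iota.
  - by rewrite uniq_rootsE.
have PEo : P \is a polyOver E.
  by rewrite rpredB ?rpredX ?polyOverX ?polyOverC.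
have FE : <<E & rs>>%VS = F.
  apply/eqP; rewrite eqEsubv; apply/andP; split.
    apply/Fadjoin_seqP; split => // _ /mapP [i _ ->].
    by rewrite rpredM ?rpredX // (subvP EF).
  apply/FadjoinP; split; first exact: subv_adjoin_seq.
  apply: seqv_sub_adjoin; apply/mapP; exists 0%N; first by rewrite mem_iota.
  by rewrite expr0 mulr1.
have gal : galois E F.
  apply/splitting_galoisField; exists P; split => //.
    by rewrite PE separable_prod_XsubC.
  by exists rs => //; rewrite PE eqpxx.
set d := \dim_E F.
have dG : d = #|('Gal(F / E))%g| by apply: galois_dim.
have dA : d = adjoin_degree E a by rewrite adjoin_degreeE.
have d0 : (0 < d)%N by rewrite dA.
have dp : (d <= p)%N.
  have : (size (minPoly E a) <= size P)%N.
    apply: dvdp_leq; first by rewrite -size_poly_eq0 size_XnsubC.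
    by apply: minPoly_dvdp => //; rewrite /root /P !hornerE ha subrr.
  by rewrite size_minPoly size_XnsubC // -dA.
have aD : a ^+ d \in E.
  have NE : galNorm E F a \in E.
    by rewrite -{2}(galois_fixedField gal); apply: galNorm_fixedField.
  have xa : forall x, x \in ('Gal(F / E))%g -> x a / a \in E /\ x a != 0.
    move=> x xG.
    have xap : (x a) ^+ p = b.
      rewrite -rmorphXn ha; exact: (fixed_gal EF xG bE).
    have xa0 : x a != 0 by have := b0; rewrite -xap expf_eq0 p0.
    split => //.
    have : (x a / a) ^+ p = 1 by rewrite expr_div_n xap ha divff.
    move/(prim_rootP pz) => [i ->]; exact: rpredX.
  have Pi0 : \prod_(x in ('Gal(F / E))%g) (x a / a) != 0.
    apply/prodf_neq0 => x xG; have [_ xa0] := xa x xG.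
    by rewrite mulf_eq0 invr_eq0 (negPf a0) (negPf xa0).
  have NEq : galNorm E F a = a ^+ d * \prod_(x in ('Gal(F / E))%g) (x a / a).
    rewrite /galNorm dG -prodr_const -big_split /=; apply: eq_bigr => x _.
    by rewrite mulrC divfK.
  have -> : a ^+ d = galNorm E F a / \prod_(x in ('Gal(F / E))%g) (x a / a).
    by rewrite NEq mulfK.
  by rewrite rpredM // rpredV rpred_prod // => x xG; have [] := xa x xG.
have dp' : d = p.
  apply/eqP; rewrite eqn_leq dp /=; rewrite leqNgt; apply/negP => dlt.
  have cop0 : coprime d p by rewrite coprime_sym prime_coprime // gtnNdvd.
  have cop : gcdn d p = 1%N by apply/eqP.
  case: (egcdnP p d0) => km kn /[!cop] Ekm _.
  move: aE; rewrite -[a]expr1; apply/negP/negPn.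
  have -> : a ^+ 1 = a ^+ (km * d) / (a ^+ p) ^+ kn.
    by rewrite -exprM Ekm exprD [(p * kn)%N]mulnC mulrAC mulfV ?mul1r // expf_neq0.
  apply: rpredM; first by rewrite mulnC exprM rpredX.
  by rewrite rpredV rpredX // ha.
split => //.
by apply: prime_cyclic; rewrite -dG dp'.
Qed.
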